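(* Suppose that OnlinePacker (described in the context) has produced a packing of n horizontal parallelograms of height 1 and width at most 1 in which there are no near-empty boxes. Then the density of the pieces in the occupied part of the strip is at least Ω(n^{1-log 3}), where log is base 2.
   Context: Setting: online translational strip packing. The strip is a horizontal strip of height 1, bounded on the left by a vertical segment and unbounded to the right. Pieces arrive one at a time, each must be placed by a translation only, interior-disjoint from previously placed pieces, before the next piece is revealed. The occupied part of the strip is the part from its left end to the vertical line through the rightmost point of a placed piece; density is total piece area divided by the area of the occupied part. Here all pieces are horizontal parallelograms (parallelograms with a pair of horizontal edges) of height 1 and width at most 1. Box types: these form an infinite ternary tree. The root, the basic box type, is a 2 x 1 rectangle. A d-dimensional box type is a vector [x_1,...,x_d] in {-1,0,+1}^d and is a horizontal parallelogram of height 1. Given type T with bottom edge b and top edge t, split b into three equal consecutive segments b_{-1}, b_0, b_{+1} and t likewise into t_{-1}, t_0, t_{+1}; the child type T ⊕ [x_{d+1}] is the parallelogram spanned by b_0 and t_{x_{d+1}}. Thus a d-dimensional type has base edges of length 2·3^{-d} (area 2·3^{-d}). A box type T matches a piece P if P can be packed into T and area(T) ≤ 6·area(P). A type is suitable for P if it is an ancestor (including itself) of a type matching P. Algorithm OnlinePacker: each allocated box of type T contains either a single piece that T matches, or one, two or three boxes whose types are children of T. When a piece P arrives: if there is an allocated box B_1 whose type T_1 is suitable for P (with T_1,...,T_k the tree path from T_1 to a type T_k matching P) and B_1 has room for one more box of type T_2, choose such B_1 of maximum dimension; then for i = 1,...,k-1 allocate in B_i a new box B_{i+1} of type T_{i+1},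 as far left in B_i as possible, and place P in B_k. Otherwise allocate a new basic box as far left in the strip as possible, call it B_1, and proceed the same way. A d-dimensional box is near-empty if exactly one (d+1)-dimensional box is allocated in it. *)

(* Defs.v *)
From Stdlib Require Import Reals List.
Import ListNotations.
Open Scope R_scope.

(* Horizontal parallelograms of height 1 lying in the strip R x [0,1].    *)
(* pb = x-coordinate of the left end of the bottom edge (y = 0),           *)
(* pt = x-coordinate of the left end of the top edge (y = 1),              *)
(* pl = length of the two horizontal edges.                                *)
Record para := mkPara { pb : R; pt : R; pl : R }.

Definition in_closed (p : para) (x y : R) : Prop :=
  0 <= y <= 1 /\
  pb p + (pt p - pb p) * y <= x <= pb p + (pt p - pb p) * y + pl p.

Definition in_open (p : para) (x y : R) : Prop :=
  0 < y < 1 /\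
  pb p + (pt p - pb p) * y < x < pb p + (pt p - pb p) * y + pl p.

Definition contained (p q : para) : Prop :=
  forall x y, in_closed p x y -> in_closed q x y.

Definition int_disjoint (p q : para) : Prop :=
  ~ (exists x y, in_open p x y /\ in_open q x y).

Definition translate (p : para) (h : R) : para :=
  mkPara (pb p + h) (pt p + h) (pl p).

Definition area (p : para) : R := pl p.

Definition right_end (p : para) : R := Rmax (pb p) (pt p) + pl p.

(* a piece: horizontal parallelogram of height 1 and width (horizontal
   extent of the piece) at most 1, of positive area *)
Definition valid_piece (p : para) : Prop :=
  0 < pl p /\ pl p + Rabs (pt p - pb p) <= 1.

(* Box types: vectors over {-1,0,+1}.                                      *)
Inductive dir := Dm | D0 | Dp.

Definition dirR (d : dir) : R :=
  match d with Dm => -1 | D0 => 0 | Dp => 1 end.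

Definition btype := list dir.

(* child of a parallelogram: spanned by b_0 and t_x *)
Definition child_para (p : para) (x : dir) : para :=
  mkPara (pb p + pl p / 3) (pt p + (1 + dirR x) * pl p / 3) (pl p / 3).

Definition basic_para : para := mkPara 0 0 2.

(* the parallelogram of type [x_1,...,x_d] (in coordinates of a basic box
   whose left side is at x = 0) *)
Definition type_para (T : btype) : para := fold_left child_para T basic_para.

Definition matches (T : btype) (P : para) : Prop :=
  (exists h, contained (translate P h) (type_para T)) /\
  area (type_para T) <= 6 * area P.

Definition suitable (T : btype) (P : para) : Prop :=
  exists ext, matches (T ++ ext) P.

(* an allocated box: its type, the horizontal translation of the type's   *)
(* parallelogram, and the index of the box it was allocated in (None for  *)
(* basic boxes, allocated directly in the strip)                          *)
Record box := mkBox { bty : btype; bpos : R; bpar : option nat }.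

Definition box_region (b : box) : para := translate (type_para (bty b)) (bpos b).

(* boxes: allocated boxes (indexed by position in the list);
   placed: placed pieces (their region) together with the index of the box
   they were placed in *)
Record state := mkState { boxes : list box; placed : list (para * nat) }.

Definition empty_state : state := mkState [] [].

Definition dummy_box : box := mkBox [] 0 None.
Definition nth_box (st : state) (i : nat) : box := nth i (boxes st) dummy_box.

Definition is_child (st : state) (i j : nat) : Prop :=
  (j < length (boxes st))%nat /\ bpar (nth_box st j) = Some i.

Definition holds_piece (st : state) (i : nat) : Prop :=
  exists q, In q (placed st) /\ snd q = i.

Definition fits_in (st : state) (i : nat) (T : btype) (h : R) : Prop :=
  contained (translate (type_para T) h) (box_region (nth_box st i)) /\
  (forall j, is_child st i j ->
     int_disjoint (translate (type_para T) h) (box_region (nth_box st j))).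

(* box i has room for one more box of type T (a box containing a piece
   contains nothing else) *)
Definition has_room (st : state) (i : nat) (T : btype) : Prop :=
  ~ holds_piece st i /\ exists h, fits_in st i T h.

Definition leftmost_in (st : state) (i : nat) (T : btype) (h : R) : Prop :=
  fits_in st i T h /\ forall h', fits_in st i T h' -> h <= h'.

Definition add_box (st : state) (b : box) : state :=
  mkState (boxes st ++ [b]) (placed st).

(* alloc_chain st i ext st' k : starting from box i, successively allocate
   boxes of the types T_1 ++ [x_1], T_1 ++ [x_1;x_2], ... (ext = [x_1;...]),
   each as far left as possible in the previous one; k is the last box *)
Inductive alloc_chain : state -> nat -> list dir -> state -> nat -> Prop :=
| ac_nil : forall st i, alloc_chain st i [] st i
| ac_cons : forall st i x ext h st' k,
    let T := bty (nth_box st i) ++ [x] in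
    leftmost_in st i T h ->
    alloc_chain (add_box st (mkBox T h (Some i))) (length (boxes st)) ext st' k ->
    alloc_chain st i (x :: ext) st' k.

Definition place (st : state) (P : para) (k : nat) (st' : state) : Prop :=
  exists h,
    contained (translate P h) (box_region (nth_box st k)) /\
    (forall q, In q (placed st) -> int_disjoint (translate P h) (fst q)) /\
    st' = mkState (boxes st) (placed st ++ [(translate P h, k)]).

Definition candidate (st : state) (P : para) (i : nat) (x : dir) (ext : list dir) : Prop :=
  (i < length (boxes st))%nat /\
  matches (bty (nth_box st i) ++ x :: ext) P /\
  has_room st i (bty (nth_box st i) ++ [x]).

Definition basic_box_at (X : R) : para := translate basic_para X.

Definition basic_free (st : state) (X : R) : Prop :=
  0 <= X /\
  (forall j, (j < length (boxes st))%nat ->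
     int_disjoint (basic_box_at X) (box_region (nth_box st j))) /\
  (forall q, In q (placed st) -> int_disjoint (basic_box_at X) (fst q)).

Inductive packer_step (st : state) (P : para) (st' : state) : Prop :=
| step_existing : forall i x ext st1 k,
    candidate st P i x ext ->
    (forall j y ext', candidate st P j y ext' ->
       (length (bty (nth_box st j)) <= length (bty (nth_box st i)))%nat) ->
    alloc_chain st i (x :: ext) st1 k ->
    place st1 P k st' ->
    packer_step st P st'
| step_new : forall X ext st1 k,
    (~ exists j y ext', candidate st P j y ext') ->
    basic_free st X ->
    (forall X', basic_free st X' -> X <= X') ->
    matches ext P ->
    alloc_chain (add_box st (mkBox [] X None)) (length (boxes st)) ext st1 k ->
    place st1 P k st' ->
    packer_step st P st'.

Inductive packer_run : list para -> state -> Prop :=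
| run_nil : packer_run [] empty_state
| run_snoc : forall ps P st st',
    packer_run ps st -> packer_step st P st' -> packer_run (ps ++ [P]) st'.

Definition near_empty (st : state) (i : nat) : Prop :=
  (i < length (boxes st))%nat /\
  length (filter (fun b => match bpar b with
                           | Some j => Nat.eqb j i | None => false end)
                 (boxes st)) = 1%nat.

Definition no_near_empty (st : state) : Prop :=
  forall i, ~ near_empty st i.

(* density = total piece area / area of the occupied part
   [0, max right end] x [0,1] *)
Definition total_area (st : state) : R :=
  fold_right Rplus 0 (map (fun q => area (fst q)) (placed st)).

Definition occupied_length (st : state) : R :=
  fold_right Rmax 0 (map (fun q => right_end (fst q)) (placed st)).

Definition density (st : state) : R := total_area st / occupied_length st.

(* Main.v *)
Require Import Defs.
From Stdlib Require Import Reals List.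
From Stdlib Require Import Lra Lia Psatz.
Import ListNotations.
Open Scope R_scope.

Fixpoint sumI (n : nat) (g : nat -> R) : R :=
  match n with O => 0 | S m => sumI m g + g m end.

Definition sumL (l : list R) : R := fold_right Rplus 0 l.

Lemma sumI_ext n g h : (forall i, (i < n)%nat -> g i = h i) -> sumI n g = sumI n h.
Proof. induction n; simpl; intros H; auto. rewrite IHn by (intros; apply H; lia). rewrite H by lia. reflexivity. Qed.

Lemma sumI_le n g h : (forall i, (i < n)%nat -> g i <= h i) -> sumI n g <= sumI n h.
Proof. induction n; simpl; intros H; [lra|].
  assert (sumI n g <= sumI n h) by (apply IHn; intros; apply H; lia).
  assert (g n <= h n) by (apply H; lia). lra. Qed.

Lemma sumI_plus n g h : sumI n (fun i => g i + h i) = sumI n g + sumI n h.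
Proof. induction n; simpl; [lra|]. rewrite IHn. lra. Qed.

Lemma sumI_zero n g : (forall i, (i < n)%nat -> g i = 0) -> sumI n g = 0.
Proof. induction n; simpl; intros H; auto. rewrite IHn by (intros; apply H; lia). rewrite H by lia. lra. Qed.

Lemma sumI_delta N g j : (j < N)%nat ->
  sumI N (fun i => g i * (if Nat.eqb j i then 1 else 0)) = g j.
Proof.
  induction N; intros Hj; [lia|]. simpl.
  destruct (Nat.eq_dec j N) as [->|Hne].
  - rewrite Nat.eqb_refl. rewrite sumI_zero. lra.
    intros i Hi. destruct (Nat.eqb_spec N i); [lia|]. lra.
  - rewrite IHN by lia. destruct (Nat.eqb_spec j N); [lia|]. lra.
Qed.

Lemma sumL_app l1 l2 : sumL (l1 ++ l2) = sumL l1 + sumL l2.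
Proof. induction l1; unfold sumL in *; simpl; [lra|]. rewrite IHl1. lra. Qed.

Lemma sumL_map_le {A} (l : list A) (a b : A -> R) :
  (forall x, In x l -> a x <= b x) -> sumL (map a l) <= sumL (map b l).
Proof. induction l as [|x l IH]; unfold sumL in *; simpl; intros H; [lra|].
  assert (a x <= b x) by (apply H; left; auto).
  assert (fold_right Rplus 0 (map a l) <= fold_right Rplus 0 (map b l))
    by (apply IH; intros; apply H; right; auto). lra. Qed.

Lemma sumL_map_plus {A} (l : list A) (a b : A -> R) :
  sumL (map (fun x => a x + b x) l) = sumL (map a l) + sumL (map b l).
Proof. induction l as [|x l IH]; unfold sumL in *; simpl; [lra|]. rewrite IH. lra. Qed.

Lemma sumL_map_lin {A} (l : list A) (a : A -> R) c d :
  sumL (map (fun x => c * (a x - d)) l) = c * (sumL (map a l) - d * INR (length l)).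
Proof. induction l as [|x l IH]; unfold sumL in *; simpl map; simpl fold_right; [simpl; ring|].
  rewrite IH. simpl length. rewrite ?S_INR. destruct (length l); simpl; ring. Qed.

Lemma sumL_ind {A} (l : list A) (p : A -> bool) :
  sumL (map (fun x => if p x then 1 else 0) l) = INR (length (filter p l)).
Proof. induction l as [|x l IH]; unfold sumL in *; simpl; [reflexivity|].
  rewrite IH. destruct (p x); cbn -[INR]; [rewrite S_INR|]; ring. Qed.

Lemma sumI_nth {A} (h : A -> R) (d : A) (l : list A) :
  sumI (length l) (fun i => h (nth i l d)) = sumL (map h l).
Proof.
  induction l as [|a l IH] using rev_ind; [reflexivity|].
  rewrite length_app, Nat.add_1_r. simpl sumI.
  rewrite map_app, sumL_app.
  rewrite (sumI_ext _ _ (fun i => h (nth i l d))).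
  2:{ intros i Hi. rewrite app_nth1 by lia. reflexivity. }
  rewrite IH. rewrite nth_middle. unfold sumL; simpl. lra.
Qed.

Definition cntk {A} (k : A -> option nat) (l : list A) (i : nat) : nat :=
  length (filter (fun x => match k x with Some j => Nat.eqb j i | None => false end) l).

Lemma exch {A} (k : A -> option nat) (g : nat -> R) N (l : list A) :
  (forall x j, In x l -> k x = Some j -> (j < N)%nat) ->
  sumL (map (fun x => match k x with Some j => g j | None => 0 end) l)
  = sumI N (fun i => g i * INR (cntk k l i)).
Proof.
  induction l as [|x l IH]; intros H.
  - unfold sumL; simpl. symmetry. apply sumI_zero. intros. unfold cntk. simpl. lra.
  - change (sumL (map (fun x => match k x with Some j => g j | None => 0 end) (x :: l)))
      with ((match k x with Some j => g j | None => 0 end) +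
            sumL (map (fun x => match k x with Some j => g j | None => 0 end) l)).
    rewrite IH by (intros; eapply H; eauto; right; auto).
    unfold cntk. simpl filter.
    destruct (k x) as [j|] eqn:Hk.
    + assert (Hj : (j < N)%nat) by (eapply H; eauto; left; auto).
      rewrite <- (sumI_delta N g j Hj) at 1.
      rewrite <- sumI_plus. apply sumI_ext. intros i Hi.
      destruct (Nat.eqb j i); simpl length; [rewrite S_INR|]; ring.
    + lra.
Qed.

Lemma filter_len1 {A} (l : list A) p x : In x l -> p x = true -> (1 <= length (filter p l))%nat.
Proof. intros H1 H2. assert (In x (filter p l)) by (apply filter_In; auto).
  destruct (filter p l); simpl in *; [contradiction|lia]. Qed.

Lemma pl_fold T p : pl (fold_left child_para T p) = pl p * (/3)^(length T).
Proof. revert p; induction T; intros p; simpl; [ring|]. rewrite IHT. simpl. unfold Rdiv. ring. Qed.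

Lemma area_type T : area (type_para T) = 2 * (/3)^(length T).
Proof. unfold area, type_para. rewrite pl_fold. simpl. ring. Qed.

Lemma open_closed p x y : in_open p x y -> in_closed p x y.
Proof. unfold in_open, in_closed; intros; lra. Qed.

Definition nbasic (st : state) : nat :=
  length (filter (fun b => match bpar b with None => true | Some _ => false end) (boxes st)).

Definition invA (st : state) : Prop := forall i, (i < length (boxes st))%nat ->
  match bpar (nth_box st i) with
  | None => bty (nth_box st i) = []
  | Some j => (j < length (boxes st))%nat /\
              length (bty (nth_box st i)) = S (length (bty (nth_box st j)))
  end.

Definition invC (st : state) : Prop := forall q, In q (placed st) ->
  (snd q < length (boxes st))%nat /\ contained (fst q) (box_region (nth_box st (snd q))) /\
  area (type_para (bty (nth_box st (snd q)))) <= 6 * area (fst q).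

Definition invD (st : state) : Prop := forall i, (i < length (boxes st))%nat -> forall x y,
  in_closed (box_region (nth_box st i)) x y -> 0 <= x <= 2 * INR (nbasic st).

Definition CB st i := (exists c, is_child st i c) \/ holds_piece st i.

Definition base st := invA st /\ invC st /\ invD st.
Definition InvK st k := base st /\ (k < length (boxes st))%nat /\
  forall i, (i < length (boxes st))%nat -> i <> k -> CB st i.
Definition Inv st := base st /\ forall i, (i < length (boxes st))%nat -> CB st i.

Lemma nth_box_add_old st b i : (i < length (boxes st))%nat -> nth_box (add_box st b) i = nth_box st i.
Proof. intros H. unfold nth_box, add_box; simpl. apply app_nth1; auto. Qed.
Lemma nth_box_add_new st b : nth_box (add_box st b) (length (boxes st)) = b.
Proof. unfold nth_box, add_box; simpl. apply nth_middle. Qed.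
Lemma len_add st b : length (boxes (add_box st b)) = S (length (boxes st)).
Proof. unfold add_box; simpl. rewrite length_app; simpl; lia. Qed.
Lemma nbasic_add st b : nbasic (add_box st b) =
  (nbasic st + match bpar b with None => 1 | Some _ => 0 end)%nat.
Proof. unfold nbasic, add_box; simpl. rewrite filter_app, length_app. simpl. destruct (bpar b); simpl; lia. Qed.

Lemma CB_add st b i : (i < length (boxes st))%nat -> CB st i -> CB (add_box st b) i.
Proof.
  intros Hi [[c [Hc1 Hc2]]|[q [Hq1 Hq2]]].
  - left. exists c. split; [rewrite len_add; lia|]. rewrite nth_box_add_old; auto.
  - right. exists q. simpl. auto.
Qed.

Lemma add_child_inv st i b :
  InvK st i -> bpar b = Some i -> length (bty b) = S (length (bty (nth_box st i))) ->
  contained (box_region b) (box_region (nth_box st i)) ->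
  InvK (add_box st b) (length (boxes st)).
Proof.
  intros [[HA [HC HD]] [Hi HB]] Hb Hl Hc.
  split; [split; [|split]|split].
  - intros j Hj. rewrite len_add in Hj. rewrite len_add.
    destruct (Nat.eq_dec j (length (boxes st))) as [->|Hne].
    + rewrite nth_box_add_new, Hb. split; [lia|]. rewrite nth_box_add_old by auto. auto.
    + rewrite nth_box_add_old by lia. specialize (HA j ltac:(lia)).
      destruct (bpar (nth_box st j)) as [p|]; auto. destruct HA as [Hp Hlp].
      split; [lia|]. rewrite nth_box_add_old by auto. auto.
  - intros q Hq. destruct (HC q Hq) as [H1 [H2 H3]]. rewrite len_add.
    rewrite nth_box_add_old by auto. split; [lia|auto].
  - intros j Hj x y Hin. rewrite nbasic_add, Hb, Nat.add_0_r. rewrite len_add in Hj.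
    destruct (Nat.eq_dec j (length (boxes st))) as [->|Hne].
    + rewrite nth_box_add_new in Hin. apply Hc in Hin. exact (HD i Hi x y Hin).
    + rewrite nth_box_add_old in Hin by lia. exact (HD j ltac:(lia) x y Hin).
  - rewrite len_add; lia.
  - intros j Hj Hne. rewrite len_add in Hj.
    destruct (Nat.eq_dec j i) as [->|Hji].
    + left. exists (length (boxes st)). split; [rewrite len_add; lia|].
      rewrite nth_box_add_new. auto.
    + apply CB_add; [lia|]. apply HB; lia.
Qed.

Lemma free_right st : Inv st -> basic_free st (2 * INR (nbasic st)).
Proof.
  intros [[HA [HC HD]] HB]. split; [|split].
  - assert (0 <= INR (nbasic st)) by apply pos_INR. lra.
  - intros j Hj [x [y [H1 H2]]]. apply open_closed in H2. specialize (HD j Hj x y H2).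
    unfold in_open, basic_box_at, translate in H1; simpl in H1. nra.
  - intros q Hq [x [y [H1 H2]]]. destruct (HC q Hq) as [Hk [Hc _]].
    apply open_closed in H2. apply Hc in H2. specialize (HD _ Hk x y H2).
    unfold in_open, basic_box_at, translate in H1; simpl in H1. nra.
Qed.

Lemma add_basic_inv st X : Inv st -> 0 <= X -> X <= 2 * INR (nbasic st) ->
  InvK (add_box st (mkBox [] X None)) (length (boxes st)).
Proof.
  intros [[HA [HC HD]] HB] HX0 HX1.
  split; [split; [|split]|split].
  - intros j Hj. rewrite len_add in Hj. rewrite len_add.
    destruct (Nat.eq_dec j (length (boxes st))) as [->|Hne].
    + rewrite nth_box_add_new. reflexivity.
    + rewrite nth_box_add_old by lia. specialize (HA j ltac:(lia)).
      destruct (bpar (nth_box st j)) as [p|]; auto. destruct HA as [Hp Hlp].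
      split; [lia|]. rewrite nth_box_add_old by auto. auto.
  - intros q Hq. destruct (HC q Hq) as [H1 [H2 H3]]. rewrite len_add.
    rewrite nth_box_add_old by auto. split; [lia|auto].
  - intros j Hj x y Hin. rewrite nbasic_add. simpl bpar. rewrite plus_INR. simpl INR.
    rewrite len_add in Hj.
    destruct (Nat.eq_dec j (length (boxes st))) as [->|Hne].
    + rewrite nth_box_add_new in Hin. unfold box_region, in_closed, translate in Hin.
      simpl in Hin. nra.
    + rewrite nth_box_add_old in Hin by lia. specialize (HD j ltac:(lia) x y Hin). lra.
  - rewrite len_add; lia.
  - intros j Hj Hne. rewrite len_add in Hj. apply CB_add; [lia|]. apply HB; lia.
Qed.

Lemma chain_inv st i ext st' k : alloc_chain st i ext st' k -> InvK st i ->
  InvK st' k /\ bty (nth_box st' k) = bty (nth_box st i) ++ ext /\ placed st' = placed st.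
Proof.
  induction 1 as [st i | st i x ext h st' k T Hl Hc IH]; intros Hinv.
  - split; auto. split; auto. rewrite app_nil_r; auto.
  - assert (Hi: (i < length (boxes st))%nat) by (destruct Hinv as [_ [H _]]; auto).
    assert (H2 : InvK (add_box st (mkBox T h (Some i))) (length (boxes st))).
    { apply (add_child_inv st i); auto.
      - simpl. unfold T. rewrite length_app; simpl; lia.
      - destruct Hl as [[Hf _] _]. exact Hf. }
    destruct (IH H2) as [H3 [H4 H5]]. split; auto. split.
    + rewrite H4, nth_box_add_new. simpl. unfold T. rewrite <- app_assoc. reflexivity.
    + rewrite H5. reflexivity.
Qed.

Lemma place_inv st k P st' : InvK st k -> place st P k st' ->
  area (type_para (bty (nth_box st k))) <= 6 * area P ->
  Inv st' /\ length (placed st') = S (length (placed st)).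
Proof.
  intros [[HA [HC HD]] [Hk HB]] [h [Hc [Hd ->]]] Har.
  split; [split; [split; [|split]|]|].
  - exact HA.
  - intros q Hq. simpl in Hq. apply in_app_or in Hq. destruct Hq as [Hq|[Hq|[]]].
    + exact (HC q Hq).
    + subst q. simpl. split; [exact Hk|]. split; [exact Hc|]. exact Har.
  - exact HD.
  - intros i Hi. simpl in Hi. destruct (Nat.eq_dec i k) as [->|Hne].
    + right. exists (translate P h, k). split; [|reflexivity].
      simpl. apply in_or_app. right. left. reflexivity.
    + destruct (HB i Hi Hne) as [[c Hc1]|[q [Hq1 Hq2]]].
      * left. exists c. exact Hc1.
      * right. exists q. split; [|auto]. simpl. apply in_or_app. left. auto.
  - simpl. rewrite length_app. simpl. lia.
Qed.

Lemma step_inv st P st' : Inv st -> packer_step st P st' ->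
  Inv st' /\ length (placed st') = S (length (placed st)).
Proof.
  intros Hinv Hs.
  destruct Hs as [i x ext st1 k Hcand Hmax Hch Hpl | X ext st1 k Hno Hfree Hmin Hm Hch Hpl].
  - destruct Hcand as [Hi [Hm _]].
    assert (HK : InvK st i) by (destruct Hinv as [Hb HB]; split; auto).
    destruct (chain_inv _ _ _ _ _ Hch HK) as [HK1 [Hty Hp]].
    destruct (place_inv _ _ _ _ HK1 Hpl) as [H1 H2].
    + rewrite Hty. destruct Hm as [_ Ha]. exact Ha.
    + split; auto. rewrite H2, Hp. reflexivity.
  - assert (HX : X <= 2 * INR (nbasic st)) by (apply Hmin; apply free_right; auto).
    assert (HK := add_basic_inv st X Hinv (proj1 Hfree) HX).
    destruct (chain_inv _ _ _ _ _ Hch HK) as [HK1 [Hty Hp]].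
    rewrite nth_box_add_new in Hty. simpl in Hty.
    destruct (place_inv _ _ _ _ HK1 Hpl) as [H1 H2].
    + rewrite Hty. destruct Hm as [_ Ha]. exact Ha.
    + split; auto. rewrite H2, Hp. reflexivity.
Qed.

Lemma run_inv ps st : packer_run ps st -> Inv st /\ length (placed st) = length ps.
Proof.
  induction 1.
  - split; [|reflexivity]. unfold Inv, base, invA, invC, invD; simpl.
    repeat split; intros; simpl in *; try lia; contradiction.
  - destruct IHpacker_run as [H1 H2]. destruct (step_inv _ _ _ H1 H0) as [H3 H4].
    split; auto. rewrite H4, length_app, H2; simpl; lia.
Qed.

Lemma ln_le' x y : 0 < x -> x <= y -> ln x <= ln y.
Proof. intros H1 H2. destruct (Rle_lt_or_eq_dec _ _ H2) as [H|H].
  - left. apply ln_increasing; auto.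
  - subst; lra. Qed.

Lemma exp_le' x y : x <= y -> exp x <= exp y.
Proof. intros H. destruct (Rle_lt_or_eq_dec _ _ H) as [H'|H'].
  - left. apply exp_increasing; auto.
  - subst; lra. Qed.

Lemma ln2_pos : 0 < ln 2.
Proof. rewrite <- ln_1. apply ln_increasing; lra. Qed.

Lemma ln23 : ln 2 < ln 3.
Proof. apply ln_increasing; lra. Qed.

Lemma pow_exp x d : 0 < x -> x ^ d = exp (INR d * ln x).
Proof. intros H. rewrite <- Rpower_pow by auto. reflexivity. Qed.

Lemma key_ineq (n : R) (d : nat) : 1 <= n ->
  (/3)^d >= 2/3 * Rpower n (1 - ln 3 / ln 2) * ((/2)^d - / (2*n)).
Proof.
  intros Hn.
  assert (L2 := ln2_pos). assert (L23 := ln23).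
  assert (Hp : 0 < Rpower n (1 - ln 3/ln 2)) by (unfold Rpower; apply exp_pos).
  assert (Hi : 0 < / (2*n)) by (apply Rinv_0_lt_compat; lra).
  destruct (Rlt_or_le ((/2)^d) (/(2*n))) as [Hs|Hs].
  - assert (0 <= (/3)^d) by (apply pow_le; lra). nra.
  - assert (Hmain : 2/3 * Rpower n (1 - ln 3 / ln 2) * (/2)^d <= (/3)^d).
    { apply ln_le' in Hs; [|exact Hi].
      rewrite ln_Rinv in Hs by lra. rewrite ln_mult in Hs by lra.
      rewrite pow_exp in Hs by lra. rewrite ln_exp in Hs. rewrite ln_Rinv in Hs by lra.
      assert (Hu : 0 <= ln n) by (rewrite <- ln_1; apply ln_le'; lra).
      rewrite (pow_exp (/3)) by lra. rewrite (pow_exp (/2)) by lra.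
      rewrite !ln_Rinv by lra.
      replace (2/3) with (exp (ln 2 + - ln 3)).
      2:{ rewrite exp_plus, exp_Ropp, !exp_ln by lra. field. }
      unfold Rpower. rewrite <- !exp_plus. apply exp_le'.
      set (r := ln 3 / ln 2).
      assert (E3 : ln 3 = r * ln 2) by (unfold r; field; lra).
      assert (Hr : 1 < r) by (unfold r; apply (Rmult_lt_reg_r (ln 2)); [lra|]; field_simplify; lra).
      rewrite E3. set (a := INR d) in *. set (u := ln n) in *. set (L := ln 2) in *.
      assert (0 <= (r - 1) * (L + u - a * L)) by (apply Rmult_le_pos; nra).
      nra. }
    nra.
Qed.

Lemma fold_max_le (l : list R) M : 0 <= M -> (forall x, In x l -> x <= M) -> fold_right Rmax 0 l <= M.
Proof. induction l; simpl; intros H0 H; auto.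
  apply Rmax_lub; [apply H; left; auto|apply IHl; auto]. Qed.

Lemma fold_max_ge (l : list R) x : In x l -> x <= fold_right Rmax 0 l.
Proof. induction l; simpl; intros H; [contradiction|]. destruct H as [->|H].
  - apply Rmax_l.
  - eapply Rle_trans; [apply IHl; auto|apply Rmax_r]. Qed.

Theorem lemma17 :
  exists c : R, 0 < c /\
  exists N : nat,
  forall (ps : list para) (st : state),
    (N <= length ps)%nat ->
    Forall valid_piece ps ->
    packer_run ps st ->
    no_near_empty st ->
    density st >= c * Rpower (INR (length ps)) (1 - ln 3 / ln 2).
Proof.
  exists (1/18). split; [lra|]. exists 1%nat.
  intros ps st Hn _ Hrun Hne.
  destruct (run_inv _ _ Hrun) as [[[HA [HC HD]] HB] Hlen].
  assert (Hn1 : 1 <= INR (length ps)) by (apply (le_INR 1); auto).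
  set (n := INR (length ps)) in *.
  set (B := INR (nbasic st)) in *.
  set (N := length (boxes st)) in *.
  set (f := fun i => (/2) ^ length (bty (nth_box st i))).
  assert (Hf : forall i, 0 < f i) by (intros; unfold f; apply pow_lt; lra).
  assert (Hpar : forall b j, In b (boxes st) -> bpar b = Some j ->
                   (j < N)%nat /\ (/2)^(length (bty b)) = f j / 2).
  { intros b j Hb Hj. destruct (In_nth _ _ dummy_box Hb) as [c [Hc Hcb]].
    specialize (HA c Hc). unfold nth_box in HA. rewrite Hcb, Hj in HA.
    destruct HA as [H1 H2]. split; auto. rewrite H2. unfold f, nth_box. simpl. field. }
  assert (E1 : sumL (map (fun b => (/2)^(length (bty b))) (boxes st)) =
               B + sumI N (fun i => f i / 2 * INR (cntk bpar (boxes st) i))).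
  { rewrite (map_ext_in _ (fun b => (if match bpar b with None => true | Some _ => false end
                                       then 1 else 0) +
                                    match bpar b with Some j => f j / 2 | None => 0 end)).
    - rewrite sumL_map_plus, sumL_ind. f_equal.
      apply (exch bpar (fun j => f j / 2) N (boxes st)).
      intros b j Hb Hj. apply (Hpar b j Hb Hj).
    - intros b Hb. destruct (bpar b) as [j|] eqn:Hj.
      + destruct (Hpar b j Hb Hj) as [_ H]. rewrite H. lra.
      + destruct (In_nth _ _ dummy_box Hb) as [c [Hc Hcb]].
        specialize (HA c Hc). unfold nth_box in HA. rewrite Hcb, Hj in HA.
        rewrite HA. simpl. lra. }
  assert (E2 : sumI N f = sumL (map (fun b => (/2)^(length (bty b))) (boxes st))).
  { unfold N, f, nth_box. exact (sumI_nth (fun b : box => (/ 2) ^ length (bty b)) dummy_box (boxes st)). }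
  assert (E3 : sumL (map (fun q => f (snd q)) (placed st)) =
               sumI N (fun i => f i * INR (cntk (fun q : para * nat => Some (snd q)) (placed st) i))).
  { apply (exch (fun q : para * nat => Some (snd q)) f N (placed st)).
    intros q j Hq Hj. injection Hj as <-. apply (HC q Hq). }
  assert (Hpt : forall i, (i < N)%nat -> f i <= f i / 2 * INR (cntk bpar (boxes st) i) +
                    f i * INR (cntk (fun q : para * nat => Some (snd q)) (placed st) i)).
  { intros i Hi. assert (Hfi := Hf i).
    assert (0 <= INR (cntk bpar (boxes st) i)) by apply pos_INR.
    assert (0 <= INR (cntk (fun q : para * nat => Some (snd q)) (placed st) i)) by apply pos_INR.
    destruct (HB i Hi) as [[c [Hc1 Hc2]]|[q [Hq1 Hq2]]].
    - assert (H1 : (1 <= cntk bpar (boxes st) i)%nat).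
      { unfold cntk. apply (filter_len1 _ _ (nth_box st c)).
        + apply nth_In. exact Hc1.
        + rewrite Hc2. apply Nat.eqb_refl. }
      assert (H2 : cntk bpar (boxes st) i <> 1%nat).
      { intros Heq. apply (Hne i). split; [exact Hi|exact Heq]. }
      assert (H3 : 2 <= INR (cntk bpar (boxes st) i)).
      { apply (le_INR 2). lia. }
      nra.
    - assert (H1 : (1 <= cntk (fun q : para * nat => Some (snd q)) (placed st) i)%nat).
      { unfold cntk. apply (filter_len1 _ _ q); auto. simpl. rewrite Hq2. apply Nat.eqb_refl. }
      apply le_INR in H1. simpl in H1. nra. }
  assert (HK : B <= sumL (map (fun q => f (snd q)) (placed st))).
  { apply sumI_le in Hpt. rewrite sumI_plus in Hpt. rewrite E2, E1, <- E3 in Hpt. lra. }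
  assert (Hq : forall q, In q (placed st) -> 0 < right_end (fst q) <= 2 * B /\
                 area (fst q) >= /3 * (/3)^(length (bty (nth_box st (snd q))))).
  { intros q Hq. destruct (HC q Hq) as [Hk [Hc Ha]]. rewrite area_type in Ha.
    assert (0 < (/3)^(length (bty (nth_box st (snd q))))) by (apply pow_lt; lra).
    unfold area in Ha. destruct q as [p k]. simpl in *.
    assert (Hpl : 0 < pl p) by lra.
    assert (P1 : in_closed p (pb p) 0) by (unfold in_closed; split; [lra|]; nra).
    assert (P2 : in_closed p (pb p + pl p) 0) by (unfold in_closed; split; [lra|]; nra).
    assert (P3 : in_closed p (pt p + pl p) 1) by (unfold in_closed; split; [lra|]; nra).
    apply Hc in P1, P2, P3.
    apply (HD k Hk) in P1. apply (HD k Hk) in P2. apply (HD k Hk) in P3.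
    fold B in P1, P2, P3.
    split; [|unfold area; lra].
    unfold right_end. split.
    - assert (pb p <= Rmax (pb p) (pt p)) by apply Rmax_l. lra.
    - unfold Rmax. destruct (Rle_dec (pb p) (pt p)); lra. }
  destruct (placed st) as [|q0 l0] eqn:Epl.
  { simpl in Hlen. lia. }
  assert (Hocc1 : 0 < occupied_length st).
  { unfold occupied_length. rewrite Epl.
    apply Rlt_le_trans with (right_end (fst q0)).
    - apply (Hq q0). left; auto.
    - apply fold_max_ge. simpl. left. auto. }
  assert (Hocc2 : occupied_length st <= 2 * B).
  { unfold occupied_length. rewrite Epl. apply fold_max_le.
    - assert (0 < right_end (fst q0) <= 2 * B) by (apply (Hq q0); left; auto). lra.
    - intros x Hx. apply in_map_iff in Hx. destruct Hx as [q [<- Hq']].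
      apply (Hq q Hq'). }
  assert (HB1 : 1 <= B).
  { unfold B in *. destruct (nbasic st) eqn:E; simpl in Hocc2; [lra|].
    apply (le_INR 1). lia. }
  set (ne := Rpower n (1 - ln 3 / ln 2)) in *.
  assert (Hne0 : 0 < ne) by (unfold ne, Rpower; apply exp_pos).
  assert (Htot : total_area st >= ne * B / 9).
  { unfold total_area. rewrite Epl.
    change (fold_right Rplus 0 (map (fun q => area (fst q)) (q0 :: l0)))
      with (sumL (map (fun q => area (fst q)) (q0 :: l0))).
    
    assert (Hle : sumL (map (fun q => 2/9 * ne * (f (snd q) - / (2 * n))) (q0 :: l0))
                  <= sumL (map (fun q => area (fst q)) (q0 :: l0))).
    { apply sumL_map_le. intros q Hq'. destruct (Hq q Hq') as [_ Ha].
      assert (Hk := key_ineq n (length (bty (nth_box st (snd q)))) Hn1).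
      fold ne in Hk. unfold f. nra. }
    rewrite sumL_map_lin in Hle. rewrite Hlen in Hle. fold n in Hle.
    replace (/ (2 * n) * n) with (1/2) in Hle by (field; lra).
    nra. }
  unfold density. apply Rle_ge.
  apply (Rmult_le_reg_r (occupied_length st)); [exact Hocc1|].
  replace (total_area st / occupied_length st * occupied_length st) with (total_area st)
    by (field; lra).
  nra.
Qed.
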